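(* Let $F$ be the semigroup freely generated by four idempotent elements $x_{00},x_{01},x_{10},x_{11}$ (i.e. $\langle x_{00},x_{01},x_{10},x_{11}\mid x_{ij}^2=x_{ij}\rangle$ in semigroups), and $G$ the semigroup freely generated by three idempotents $x_\lambda,x_\mu,x_\rho$. Let $h_1,h_2,h_3:F\to G$ be the homomorphisms given by $h_1:(x_{00},x_{01},x_{10},x_{11})\mapsto(x_\lambda,x_\mu,x_\rho,x_\rho)$, $h_2:(x_{00},x_{01},x_{10},x_{11})\mapsto(x_\lambda,x_\lambda,x_\mu,x_\rho)$, $h_3:(x_{00},x_{01},x_{10},x_{11})\mapsto(x_\lambda,x_\mu,x_\mu,x_\rho)$, and let $|R|\subseteq F$ be the subsemigroup of elements on which $h_1,h_2,h_3$ all agree. For $i\in\omega$ put $p_i=(x_{00}x_{01})^{i+1}(x_{10}x_{01})^i(x_{10}x_{11})^{i+1}$ and $q_i=(x_{11}x_{10})^{i+1}(x_{01}x_{10})^i(x_{01}x_{00})^{i+1}$ (where a zeroth power means the factor is omitted). Then $|R|$ is generated by $x_{00},x_{11},p_i,q_i$ ($i\in\omega$) and has the presentation $$\langle x_{00},x_{11},p_i,q_i\ (i\in\omega)\mid x_{00}^2=x_{00},\ x_{11}^2=x_{11},\ x_{00}p_i=p_i=p_ix_{11},\ x_{11}q_i=q_i=q_ix_{00}\rangle.$$ It has a normal form consisting of all nonempty words in these generators containing no subword $x_{00}^2$, $x_{11}^2$, $x_{00}p_i$, $p_ix_{11}$, $x_{11}q_i$, or $q_ix_{00}$.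
   Context: Semigroups are sets with an associative binary operation (no identity element assumed). *)

(* Defs.v *)
From Stdlib Require Import List Relations.
Import ListNotations.

Inductive step {A : Type} (rule : list A -> list A -> Prop) : list A -> list A -> Prop :=
| step_intro : forall l r a b, rule a b -> step rule (l ++ a ++ r) (l ++ b ++ r).

Definition cong {A : Type} (rule : list A -> list A -> Prop) : list A -> list A -> Prop :=
  clos_refl_sym_trans (list A) (step rule).

Inductive idem_rule {A : Type} : list A -> list A -> Prop :=
| idem_intro : forall x : A, idem_rule [x; x] [x].

Inductive X4 := x00 | x01 | x10 | x11.
Inductive X3 := xl | xm | xr.

(** Equality in F = <x00,x01,x10,x11 | x_ij^2 = x_ij> and in
    G = <xl,xm,xr | x^2 = x>; elements are nonempty words. *)
Definition eqF : list X4 -> list X4 -> Prop := cong (@idem_rule X4).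
Definition eqG : list X3 -> list X3 -> Prop := cong (@idem_rule X3).

Definition h1 (x : X4) : X3 := match x with x00 => xl | x01 => xm | x10 => xr | x11 => xr end.
Definition h2 (x : X4) : X3 := match x with x00 => xl | x01 => xl | x10 => xm | x11 => xr end.
Definition h3 (x : X4) : X3 := match x with x00 => xl | x01 => xm | x10 => xm | x11 => xr end.

Definition inR (w : list X4) : Prop :=
  w <> [] /\ eqG (map h1 w) (map h2 w) /\ eqG (map h2 w) (map h3 w).

(** w^n as a word (w^0 = empty, i.e. factor omitted). *)
Definition pw {A : Type} (n : nat) (w : list A) : list A := concat (repeat w n).

Definition p_word (i : nat) : list X4 :=
  pw (S i) [x00; x01] ++ pw i [x10; x01] ++ pw (S i) [x10; x11].
Definition q_word (i : nat) : list X4 :=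
  pw (S i) [x11; x10] ++ pw i [x01; x10] ++ pw (S i) [x01; x00].

Inductive RGen := gx00 | gx11 | gp (i : nat) | gq (i : nat).

Definition ev (g : RGen) : list X4 :=
  match g with
  | gx00 => [x00] | gx11 => [x11] | gp i => p_word i | gq i => q_word i
  end.

Definition evw (u : list RGen) : list X4 := concat (map ev u).

Inductive R_rule : list RGen -> list RGen -> Prop :=
| R_x00 : R_rule [gx00; gx00] [gx00]
| R_x11 : R_rule [gx11; gx11] [gx11]
| R_p_l : forall i, R_rule [gx00; gp i] [gp i]
| R_p_r : forall i, R_rule [gp i; gx11] [gp i]
| R_q_l : forall i, R_rule [gx11; gq i] [gq i]
| R_q_r : forall i, R_rule [gq i; gx00] [gq i].

Definition eqR : list RGen -> list RGen -> Prop := cong R_rule.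

Definition forbidden (m : list RGen) : Prop := exists b, R_rule m b.

Definition reduced (u : list RGen) : Prop :=
  u <> [] /\ ~ (exists l m r, u = l ++ m ++ r /\ forbidden m).

(* Main.v *)
Require Import Defs.
From Stdlib Require Import List Relations Lia Classical.
Import ListNotations.


Arguments pw : simpl never.

Definition mrg {A} (eqb : A -> A -> bool) (x : A) (D : list A) : list A :=
  match D with [] => [] | y :: D' => if eqb y x then D' else y :: D' end.

Fixpoint dd {A} (eqb : A -> A -> bool) (l : list A) : list A :=
  match l with
  | [] => []
  | x :: l' => match l' with [] => [x] | y :: _ => if eqb x y then dd eqb l' else x :: dd eqb l' end
  end.
Arguments dd : simpl never.

Fixpoint nad {A} (l : list A) : Prop := match l with
 | x :: ((y :: _) as l') => x <> y /\ nad l' | _ => True end.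

Definition EQB {A} (eqb : A -> A -> bool) := forall x y, eqb x y = true <-> x = y.

Lemma eqb_refl' {A} eqb (H : @EQB A eqb) x : eqb x x = true.
Proof. apply H; auto. Qed.

Lemma dd_cons {A} eqb (H : @EQB A eqb) : forall L x, dd eqb (x :: L) = x :: mrg eqb x (dd eqb L).
Proof.
  induction L as [|y L IH]; intros x. reflexivity.
  change (dd eqb (x :: y :: L)) with (if eqb x y then dd eqb (y :: L) else x :: dd eqb (y :: L)).
  rewrite IH. simpl. destruct (eqb x y) eqn:E.
  - apply H in E; subst. rewrite eqb_refl' by auto. reflexivity.
  - destruct (eqb y x) eqn:E2; auto. apply H in E2; subst. rewrite eqb_refl' in E by auto; discriminate.
Qed.

Lemma dd_nil {A} eqb : @dd A eqb [] = [].
Proof. reflexivity. Qed.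

Lemma dd_nonnil {A} eqb (H:EQB eqb) (L : list A) : L <> [] -> dd eqb L <> [].
Proof. destruct L; [congruence|]. rewrite dd_cons by auto. discriminate. Qed.

Lemma mrg_app {A} eqb x (D E : list A) : D <> [] -> mrg eqb x (D ++ E) = mrg eqb x D ++ E.
Proof. destruct D; [congruence|]. simpl. destruct (eqb a x); auto. Qed.

Lemma dd_app {A} eqb (H:EQB eqb) : forall (L : list A) z M,
  dd eqb (L ++ z :: M) = dd eqb (L ++ [z]) ++ mrg eqb z (dd eqb M).
Proof.
  induction L as [|x L IH]; intros z M.
  - simpl. rewrite !(dd_cons eqb H). reflexivity.
  - simpl. rewrite !(dd_cons eqb H). rewrite IH. rewrite mrg_app. reflexivity.
    apply dd_nonnil; auto. destruct L; discriminate.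
Qed.

Lemma dd_step {A} eqb (H:EQB eqb) : forall (l : list A) x r, dd eqb (l ++ x :: x :: r) = dd eqb (l ++ x :: r).
Proof.
  induction l as [|y l IH]; intros x r; simpl.
  - rewrite !(dd_cons eqb H). simpl. rewrite eqb_refl' by auto. reflexivity.
  - rewrite !(dd_cons eqb H). rewrite IH. reflexivity.
Qed.

Lemma cong_ctx {A} (R : list A -> list A -> Prop) : forall X Y l r,
  cong R X Y -> cong R (l ++ X ++ r) (l ++ Y ++ r).
Proof.
  intros X Y l r H. induction H.
  - apply rst_step. destruct H. 
    replace (l ++ (l0 ++ a ++ r0) ++ r) with ((l ++ l0) ++ a ++ (r0 ++ r)) by (rewrite !app_assoc; auto).
    replace (l ++ (l0 ++ b ++ r0) ++ r) with ((l ++ l0) ++ b ++ (r0 ++ r)) by (rewrite !app_assoc; auto).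
    constructor; auto.
  - apply rst_refl.
  - apply rst_sym; auto.
  - eapply rst_trans; eauto.
Qed.

Lemma cong_cons {A} (R : list A -> list A -> Prop) x X Y : cong R X Y -> cong R (x :: X) (x :: Y).
Proof. intro H. apply (cong_ctx R X Y [x] []) in H. rewrite !app_nil_r in H. exact H. Qed.

Lemma cong_dd {A} eqb (H:@EQB A eqb) : forall L, cong (@idem_rule A) L (dd eqb L).
Proof.
  induction L as [|x L IH]. apply rst_refl.
  rewrite (dd_cons eqb H). eapply rst_trans. apply cong_cons; exact IH.
  destruct (dd eqb L) as [|y D] eqn:E. apply rst_refl.
  simpl. destruct (eqb y x) eqn:E2. 2: apply rst_refl.
  apply H in E2; subst. apply rst_step.
  change (x :: x :: D) with ([] ++ [x;x] ++ D). change (x :: D) with ([] ++ [x] ++ D).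
  constructor. constructor.
Qed.

Lemma dd_iff {A} eqb (H:@EQB A eqb) : forall X Y, cong (@idem_rule A) X Y <-> dd eqb X = dd eqb Y.
Proof.
  intros X Y; split.
  - intro C. induction C; auto; try congruence.
    destruct H0. destruct H0. simpl. apply (dd_step eqb H).
  - intro E. eapply rst_trans. apply (cong_dd eqb H). rewrite E. apply rst_sym, (cong_dd eqb H).
Qed.

Lemma nad_dd {A} eqb (H:@EQB A eqb) : forall L, nad (dd eqb L).
Proof.
  induction L as [|x L IH]. exact I.
  rewrite (dd_cons eqb H). destruct (dd eqb L) as [|y D] eqn:E. exact I.
  simpl. destruct (eqb y x) eqn:E2.
  - apply H in E2; subst. exact IH.
  - split. intro; subst. rewrite eqb_refl' in E2 by auto; discriminate. exact IH.
Qed.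

Lemma nad_id {A} eqb (H:@EQB A eqb) : forall L, nad L -> dd eqb L = L.
Proof.
  induction L as [|x L IH]; intro N. reflexivity.
  rewrite (dd_cons eqb H). destruct L as [|y L]. reflexivity.
  destruct N as [N1 N2]. rewrite IH by auto. simpl.
  destruct (eqb y x) eqn:E. apply H in E; subst; congruence. reflexivity.
Qed.

Lemma dd_map {A B} ea eb (Ha : @EQB A ea) (Hb : @EQB B eb) (f : A -> B)
  (Hf : forall x y, f x = f y -> x = y) : forall L, dd eb (map f L) = map f (dd ea L).
Proof.
  induction L as [|x L IH]. reflexivity.
  simpl. rewrite (dd_cons eb Hb), (dd_cons ea Ha), IH. simpl. f_equal.
  destruct (dd ea L) as [|y D]; simpl. reflexivity.
  destruct (ea y x) eqn:E1; destruct (eb (f y) (f x)) eqn:E2; auto.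
  - apply Ha in E1; subst. rewrite eqb_refl' in E2 by auto. discriminate.
  - apply Hb in E2. apply Hf in E2; subst. rewrite eqb_refl' in E1 by auto. discriminate.
Qed.

Lemma cong_map {A B} (f : A -> B) : forall X Y, cong (@idem_rule A) X Y -> cong (@idem_rule B) (map f X) (map f Y).
Proof.
  intros X Y C. induction C.
  - apply rst_step. destruct H. destruct H. rewrite !map_app. simpl. 
    change (f x :: f x :: map f r) with ([f x; f x] ++ map f r).
    change (f x :: map f r) with ([f x] ++ map f r). constructor. constructor.
  - apply rst_refl.
  - apply rst_sym; auto.
  - eapply rst_trans; eauto.
Qed.

Lemma nad_app {A} : forall (L : list A) x M, nad (L ++ x :: M) <-> nad (L ++ [x]) /\ nad (x :: M).
Proof.
  induction L as [|y L IH]; intros x M; simpl.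
  - tauto.
  - destruct L as [|z L]; simpl.
    + tauto.
    + simpl in IH. rewrite IH. tauto.
Qed.

Arguments pw : simpl never.
Arguments dd : simpl never.

Definition eqb3 (x y : X3) : bool := match x, y with
 | xl, xl | xm, xm | xr, xr => true | _, _ => false end.
Definition eqb4 (x y : X4) : bool := match x, y with
 | x00, x00 | x01, x01 | x10, x10 | x11, x11 => true | _, _ => false end.
Lemma eqb3_ok : EQB eqb3. Proof. intros [] []; simpl; split; congruence. Qed.
Lemma eqb4_ok : EQB eqb4. Proof. intros [] []; simpl; split; congruence. Qed.

Notation D3 := (dd eqb3).
Notation D4 := (dd eqb4).
Definition A13 w := D3 (map h1 w) = D3 (map h3 w).
Definition A23 w := D3 (map h2 w) = D3 (map h3 w).

Lemma pw_0 {A} (w : list A) : pw 0 w = []. Proof. reflexivity. Qed.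
Lemma pw_S {A} n (w : list A) : pw (S n) w = w ++ pw n w. Proof. reflexivity. Qed.
Lemma pw_Sr {A} n (w : list A) : pw (S n) w = pw n w ++ w.
Proof. rewrite pw_S. induction n. rewrite pw_0, app_nil_r. reflexivity.
  rewrite pw_S, <- app_assoc, <- IHn, app_assoc. reflexivity. Qed.
Lemma pw_swap {A} n (x y : A) T : pw n [x;y] ++ x :: T = x :: pw n [y;x] ++ T.
Proof. induction n. reflexivity. rewrite !pw_S. simpl. rewrite IHn. reflexivity. Qed.
Lemma map_pw {A B} (f : A -> B) n w : map f (pw n w) = pw n (map f w).
Proof. induction n. reflexivity. rewrite !pw_S, map_app, IHn. reflexivity. Qed.

Ltac nrm := cbn [map h1 h2 h3] in *; rewrite ?(dd_cons eqb3 eqb3_ok), ?dd_nil in *; cbn [mrg eqb3 app] in *.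
Ltac nrmg := cbn [map h1 h2 h3]; rewrite ?(dd_cons eqb3 eqb3_ok), ?dd_nil; cbn [mrg eqb3 app].

Ltac nadbad := match goal with H : nad _ |- _ => simpl in H; intuition congruence end.
Ltac bad n := exfalso; unfold A13, A23 in *; first [nadbad | nrm; first [congruence | destruct n; rewrite ?pw_S, ?pw_0 in *; cbn [app] in *; congruence]].

Definition shape (x : list X4) := x = [] \/ (exists y, x = x00 :: y) \/ (exists y, x = x10 :: y).

Lemma phaseC : forall n W, nad (x11 :: W) ->
  D3 (map h3 (x11::W)) = pw n [xr;xm] ++ D3 (map h1 (x11::W)) -> A23 (x11 :: W) ->
  exists x, W = pw n [x10;x11] ++ x /\ A13 (x11::x) /\ A23 (x11::x) /\ shape x.
Proof.
  induction n; intros W HN HC HA.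
  - exists W. rewrite pw_0 in *. simpl. split; auto. split. symmetry; exact HC. split; auto.
    unfold shape. destruct W as [|[] W]; eauto.
    + unfold A23 in HA; bad n.
    + bad n.
  - unfold A23 in *. rewrite pw_S in HC.
    destruct W as [|[] W']; try bad n.
    destruct W' as [|[] W'']; try bad n.
    + destruct HN as [_ [_ HN]].
      destruct (IHn W'' HN) as (x & Hx & R).
      * nrm. nrmg. congruence.
      * nrm. nrmg. congruence.
      * exists x. rewrite Hx, pw_S. auto.
Qed.

Arguments pw : simpl never.
Arguments dd : simpl never.

Lemma phaseB : forall k j z, nad (x10 :: z) ->
  D3 (xm :: map h2 z) = pw k [xm;xl] ++ D3 (xm :: map h3 z) ->
  D3 (xm :: map h3 z) = pw j [xm;xr] ++ xm :: D3 (xr :: map h1 z) ->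
  exists x, z = pw k [x01;x10] ++ x11 :: pw (k+j) [x10;x11] ++ x /\ A13 (x11::x) /\ A23 (x11::x) /\ shape x.
Proof.
  induction k; intros j z HN H1 H2.
  - rewrite pw_0 in H1. simpl.
    destruct z as [|[] z]; try bad j.
    destruct (phaseC j z) as (x & E & R).
      + simpl in HN; tauto.
      + nrm. nrmg. rewrite pw_swap in H2. cbn [app] in H2. congruence.
      + unfold A23. nrm. nrmg. congruence.
      + exists x. rewrite E. auto.
  - destruct z as [|[] z']; try bad j; try bad k.
    destruct z' as [|[] z'']; try bad j; try bad k.
    destruct HN as [_ [_ HN]].
      destruct (IHk (S j) z'' HN) as (x & Hx & R).
      * nrm. nrmg. rewrite pw_S in H1. cbn [app] in H1. congruence.
      * nrm. nrmg. rewrite pw_Sr, <- app_assoc. cbn [app]. congruence.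
      * exists x. rewrite Hx, pw_S. cbn [app]. rewrite <- plus_n_Sm. auto.
Qed.

Lemma p_word_eq k : p_word k = pw k [x00;x01] ++ x00 :: x01 :: x10 :: pw k [x01;x10] ++ x11 :: pw k [x10;x11].
Proof.
  unfold p_word. rewrite (pw_Sr k [x00;x01]), <- app_assoc. f_equal. cbn [app].
  do 2 f_equal. rewrite pw_S. cbn [app]. rewrite pw_swap. reflexivity.
Qed.

Lemma phaseA : forall len t k, length t <= len -> nad (x00 :: x01 :: t) -> A13 (x00 :: x01 :: t) ->
  D3 (map h2 (x00::x01::t)) = pw k [xl;xm] ++ D3 (map h3 (x00::x01::t)) ->
  exists n x, pw k [x00;x01] ++ x00 :: x01 :: t = p_word n ++ x /\ A13 (x11::x) /\ A23 (x11::x) /\ shape x.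
Proof.
  induction len; intros t k Hl HN H13 H23.
  - destruct t; [|simpl in Hl; lia]. bad k.
  - unfold A13 in H13.
    destruct t as [|[] t']; try bad k.
    + destruct t' as [|[] t'']; try bad k.
      destruct (IHlen t'' (S k)) as (n & x & E & R).
      * simpl in Hl; lia.
      * destruct HN as [_ [_ HN]]; exact HN.
      * unfold A13. nrm. nrmg. congruence.
      * nrm. nrmg. rewrite pw_Sr, <- app_assoc. cbn [app]. congruence.
      * exists n, x. rewrite <- E, pw_Sr, <- app_assoc. auto.
    + destruct (phaseB k 0 t') as (x & E & R).
      * simpl in HN; tauto.
      * nrm. nrmg. rewrite pw_swap in H23. congruence.
      * nrm. nrmg. rewrite pw_0. cbn [app]. congruence.
      * exists k, x. split; [|exact R]. rewrite E, <- plus_n_O, p_word_eq. rewrite <- !app_assoc. simpl. rewrite <- !app_assoc. reflexivity.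
Qed.

Arguments pw : simpl never.
Arguments dd : simpl never.

Lemma a_case : forall t, nad (x00 :: t) -> A13 (x00::t) -> A23 (x00::t) ->
 t = [] \/ (exists x, t = x11 :: x) \/
 (exists n x, x00 :: t = p_word n ++ x /\ A13 (x11::x) /\ A23 (x11::x) /\ shape x).
Proof.
  intros t HN H13 H23.
  destruct t as [|[] t'].
  - left; reflexivity.
  - bad 0.
  - right;right. eapply (phaseA (length t') t' 0); eauto.
  - bad 0.
  - right; left; eauto.
Qed.

Definition sig4 (x : X4) : X4 := match x with x00 => x11 | x01 => x10 | x10 => x01 | x11 => x00 end.
Definition sig3 (x : X3) : X3 := match x with xl => xr | xm => xm | xr => xl end.

Lemma sig4_inv x : sig4 (sig4 x) = x. Proof. destruct x; reflexivity. Qed.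
Lemma sig4_inj x y : sig4 x = sig4 y -> x = y. Proof. destruct x, y; simpl; congruence. Qed.
Lemma sig3_inj x y : sig3 x = sig3 y -> x = y. Proof. destruct x, y; simpl; congruence. Qed.
Lemma map_sig4_inv w : map sig4 (map sig4 w) = w.
Proof. rewrite map_map. rewrite <- (map_id w) at 2. apply map_ext, sig4_inv. Qed.
Lemma map_inj {A B} (f : A -> B) (Hf : forall x y, f x = f y -> x = y) : forall l l', map f l = map f l' -> l = l'.
Proof. induction l; destruct l'; simpl; intros; try congruence. injection H as H1 H2. f_equal; auto. Qed.

Lemma D3_sig L : D3 (map sig3 L) = map sig3 (D3 L).
Proof. apply (dd_map eqb3 eqb3 eqb3_ok eqb3_ok). apply sig3_inj. Qed.

Lemma m1 w : map h1 (map sig4 w) = map sig3 (map h2 w). Proof. induction w as [|[] w]; simpl; congruence. Qed.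
Lemma m2 w : map h2 (map sig4 w) = map sig3 (map h1 w). Proof. induction w as [|[] w]; simpl; congruence. Qed.
Lemma m3 w : map h3 (map sig4 w) = map sig3 (map h3 w). Proof. induction w as [|[] w]; simpl; congruence. Qed.

Lemma A13_sig w : A13 (map sig4 w) <-> A23 w.
Proof.
  unfold A13, A23. rewrite m1, m3, !D3_sig. split; intro H.
  - exact (map_inj sig3 sig3_inj _ _ H).
  - rewrite H; reflexivity.
Qed.
Lemma A23_sig w : A23 (map sig4 w) <-> A13 w.
Proof.
  unfold A13, A23. rewrite m2, m3, !D3_sig. split; intro H.
  - exact (map_inj sig3 sig3_inj _ _ H).
  - rewrite H; reflexivity.
Qed.

Lemma nad_map {A B} (f : A -> B) (Hf : forall x y, f x = f y -> x = y) : forall l, nad (map f l) <-> nad l.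
Proof.
  induction l as [|x l IH]. simpl; tauto.
  destruct l as [|y l]. simpl; tauto.
  change (nad (map f (x :: y :: l))) with (f x <> f y /\ nad (map f (y :: l))).
  change (nad (x :: y :: l)) with (x <> y /\ nad (y :: l)).
  rewrite IH. split; intros [H1 H2]; split; auto. intro E; apply H1; congruence.
Qed.

Lemma q_sig n : map sig4 (p_word n) = q_word n.
Proof. unfold p_word, q_word. rewrite !map_app, !map_pw. reflexivity. Qed.

Definition shape' (x : list X4) := x = [] \/ (exists y, x = x11 :: y) \/ (exists y, x = x01 :: y).

Lemma e_case : forall t, nad (x11 :: t) -> A13 (x11::t) -> A23 (x11::t) ->
 t = [] \/ (exists x, t = x00 :: x) \/
 (exists n x, x11 :: t = q_word n ++ x /\ A13 (x00::x) /\ A23 (x00::x) /\ shape' x).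
Proof.
  intros t HN H13 H23.
  destruct (a_case (map sig4 t)) as [E|[(x&E)|(n&x&E&R1&R2&R3)]].
  - apply (nad_map sig4 sig4_inj (x11 :: t)). exact HN.
  - apply (A13_sig (x11::t)); auto.
  - apply (A23_sig (x11::t)); auto.
  - left. destruct t; [reflexivity|discriminate].
  - right; left. exists (map sig4 x). rewrite <- (map_sig4_inv t), E. reflexivity.
  - right; right. exists n, (map sig4 x). split; [|split; [|split]].
    + rewrite <- q_sig, <- map_app, <- E. simpl. rewrite map_sig4_inv. reflexivity.
    + apply (A13_sig (x11 :: x)). exact R2.
    + apply (A23_sig (x11 :: x)). exact R1.
    + destruct R3 as [->|[(y&->)|(y&->)]]; unfold shape'; simpl; eauto.
Qed.

Arguments pw : simpl never.
Arguments dd : simpl never.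

Lemma nad_cons2 {A} (x y : A) L : nad (x :: y :: L) <-> x <> y /\ nad (y :: L).
Proof. reflexivity. Qed.

Lemma nad_alt {A} (x y : A) n : x <> y -> nad (x :: pw n [y;x]).
Proof.
  intro H. induction n. exact I.
  rewrite pw_S. cbn [app]. rewrite !nad_cons2. split; auto.
Qed.

Lemma nad_p n : nad (p_word n).
Proof.
  rewrite p_word_eq. apply nad_app. split.
  - rewrite pw_swap, app_nil_r. apply nad_alt. discriminate.
  - rewrite !nad_cons2. split. discriminate. split. discriminate.
    change (x10 :: pw n [x01; x10] ++ x11 :: pw n [x10; x11]) with ((x10 :: pw n [x01; x10]) ++ x11 :: pw n [x10; x11]).
    apply nad_app. split.
    + rewrite <- (app_nil_r (pw n [x01;x10])), <- pw_swap, <- app_assoc. cbn [app].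
      apply nad_app. split.
      * rewrite pw_swap, app_nil_r. apply nad_alt. discriminate.
      * rewrite nad_cons2. split; [discriminate|exact I].
    + apply nad_alt. discriminate.
Qed.

Lemma nad_q n : nad (q_word n).
Proof. rewrite <- q_sig. apply (nad_map sig4 sig4_inj). apply nad_p. Qed.

Lemma p_last n : exists P, p_word n = P ++ [x11].
Proof.
  unfold p_word. rewrite (pw_Sr n [x10;x11]).
  exists (pw (S n) [x00;x01] ++ pw n [x10;x01] ++ pw n [x10;x11] ++ [x10]).
  rewrite <- !app_assoc. reflexivity.
Qed.

Lemma q_last n : exists P, q_word n = P ++ [x00].
Proof. destruct (p_last n) as [P E]. exists (map sig4 P). rewrite <- q_sig, E, map_app. reflexivity. Qed.

Lemma p_head n : exists T, p_word n = x00 :: x01 :: T.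
Proof. rewrite p_word_eq. destruct n; rewrite ?pw_S, ?pw_0; cbn [app]; eauto. Qed.
Lemma q_head n : exists T, q_word n = x11 :: x10 :: T.
Proof. destruct (p_head n) as [T E]. exists (map sig4 T). rewrite <- q_sig, E. reflexivity. Qed.

Lemma D4_glue P z M : nad (P ++ [z]) -> D4 (P ++ z :: M) = (P ++ [z]) ++ mrg eqb4 z (D4 M).
Proof. intro H. rewrite (dd_app eqb4 eqb4_ok). rewrite (nad_id eqb4 eqb4_ok); auto. Qed.

Lemma D4_glue' P z M : nad (P ++ [z]) -> D4 ((P ++ [z]) ++ M) = (P ++ [z]) ++ mrg eqb4 z (D4 M).
Proof. intro H. rewrite <- app_assoc. simpl. apply D4_glue; auto. Qed.

Lemma nad_suffix {A} (L M : list A) : nad (L ++ M) -> nad M.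
Proof.
  induction L as [|x L IH]; simpl; auto. intro H. apply IH.
  destruct (L ++ M); [exact I|]. destruct H; auto.
Qed.

Lemma gen : forall len w, length w <= len -> nad w -> w <> [] -> A13 w -> A23 w ->
  exists u, u <> [] /\ D4 (evw u) = w.
Proof.
  induction len; intros w Hl HN Hne H13 H23.
  { destruct w; [congruence|simpl in Hl; lia]. }
  destruct w as [|[] t]; [congruence| | bad 0 | bad 0 |].
  - destruct (a_case t HN H13 H23) as [->|[(x&->)|(n&x&E&R1&R2&R3)]].
    + exists [gx00]. split. discriminate. reflexivity.
    + destruct (IHlen (x11 :: x)) as (u & Hu & Eu).
      * simpl in Hl |- *; lia.
      * destruct HN; auto.
      * discriminate.
      * unfold A13 in *. nrm. nrmg. congruence.
      * unfold A23 in *. nrm. nrmg. congruence.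
      * exists (gx00 :: u). split. discriminate.
        change (evw (gx00 :: u)) with (x00 :: evw u). rewrite (dd_cons eqb4 eqb4_ok), Eu. reflexivity.
    + destruct (p_last n) as [P EP].
      assert (HNw : nad (P ++ x11 :: x)) by (rewrite E, EP, <- app_assoc in HN; exact HN).
      assert (HNP : nad (P ++ [x11])) by (apply nad_app in HNw; tauto).
      assert (HNx : nad (x11 :: x)) by (apply nad_app in HNw; tauto).
      assert (HL : length (P ++ x11 :: x) = S (length t)) by (rewrite <- (app_nil_l x) at 1; rewrite app_comm_cons, app_assoc, <- EP, <- E; reflexivity).
      rewrite length_app in HL. simpl in HL.
      assert (HP1 : 1 <= length P) by (destruct (p_head n) as [T ET]; rewrite EP in ET; destruct P; [discriminate|simpl; lia]).
      destruct R3 as [->|[(y&->)|(y&->)]].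
      * exists [gp n]. split. discriminate. rewrite E, app_nil_r. change (evw [gp n]) with (p_word n ++ []). rewrite app_nil_r, EP.
        rewrite (nad_id eqb4 eqb4_ok); auto.
      * destruct (IHlen (x00 :: y)) as (u & Hu & Eu).
        -- simpl in *; lia.
        -- destruct HNx; auto.
        -- discriminate.
        -- unfold A13 in *. nrm. nrmg. congruence.
        -- unfold A23 in *. nrm. nrmg. congruence.
        -- exists (gp n :: u). split. discriminate.
           change (evw (gp n :: u)) with (p_word n ++ evw u). rewrite EP, D4_glue' by auto. rewrite Eu. cbn [mrg eqb4].
           rewrite E, EP, <- app_assoc. reflexivity.
      * destruct (IHlen (x11 :: x10 :: y)) as (u & Hu & Eu); auto.
        -- simpl in *; lia.
        -- discriminate.
        -- exists (gp n :: u). split. discriminate.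
           change (evw (gp n :: u)) with (p_word n ++ evw u). rewrite EP, D4_glue' by auto. rewrite Eu. cbn [mrg eqb4].
           rewrite E, EP, <- app_assoc. reflexivity.
  - destruct (e_case t HN H13 H23) as [->|[(x&->)|(n&x&E&R1&R2&R3)]].
    + exists [gx11]. split. discriminate. reflexivity.
    + destruct (IHlen (x00 :: x)) as (u & Hu & Eu).
      * simpl in Hl |- *; lia.
      * destruct HN; auto.
      * discriminate.
      * unfold A13 in *. nrm. nrmg. congruence.
      * unfold A23 in *. nrm. nrmg. congruence.
      * exists (gx11 :: u). split. discriminate.
        change (evw (gx11 :: u)) with (x11 :: evw u). rewrite (dd_cons eqb4 eqb4_ok), Eu. reflexivity.
    + destruct (q_last n) as [P EP].
      assert (HNw : nad (P ++ x00 :: x)) by (rewrite E, EP, <- app_assoc in HN; exact HN).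
      assert (HNP : nad (P ++ [x00])) by (apply nad_app in HNw; tauto).
      assert (HNx : nad (x00 :: x)) by (apply nad_app in HNw; tauto).
      assert (HL : length (P ++ x00 :: x) = S (length t)) by (rewrite <- (app_nil_l x) at 1; rewrite app_comm_cons, app_assoc, <- EP, <- E; reflexivity).
      rewrite length_app in HL. simpl in HL.
      assert (HP1 : 1 <= length P) by (destruct (q_head n) as [T ET]; rewrite EP in ET; destruct P; [discriminate|simpl; lia]).
      destruct R3 as [->|[(y&->)|(y&->)]].
      * exists [gq n]. split. discriminate. rewrite E, app_nil_r. change (evw [gq n]) with (q_word n ++ []). rewrite app_nil_r, EP.
        rewrite (nad_id eqb4 eqb4_ok); auto.
      * destruct (IHlen (x11 :: y)) as (u & Hu & Eu).
        -- simpl in *; lia.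
        -- destruct HNx; auto.
        -- discriminate.
        -- unfold A13 in *. nrm. nrmg. congruence.
        -- unfold A23 in *. nrm. nrmg. congruence.
        -- exists (gq n :: u). split. discriminate.
           change (evw (gq n :: u)) with (q_word n ++ evw u). rewrite EP, D4_glue' by auto. rewrite Eu. cbn [mrg eqb4].
           rewrite E, EP, <- app_assoc. reflexivity.
      * destruct (IHlen (x00 :: x01 :: y)) as (u & Hu & Eu); auto.
        -- simpl in *; lia.
        -- discriminate.
        -- exists (gq n :: u). split. discriminate.
           change (evw (gq n :: u)) with (q_word n ++ evw u). rewrite EP, D4_glue' by auto. rewrite Eu. cbn [mrg eqb4].
           rewrite E, EP, <- app_assoc. reflexivity.
Qed.

Arguments pw : simpl never.
Arguments dd : simpl never.

Definition ok (g h : RGen) : Prop := match g, h with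
 | gx00, gx00 => False | gx00, gp _ => False | gx11, gx11 => False | gx11, gq _ => False
 | gp _, gx11 => False | gq _, gx00 => False | _, _ => True end.
Fixpoint red (u : list RGen) : Prop := match u with
 | g :: ((h :: _) as u') => ok g h /\ red u' | _ => True end.
Definition lastg (g : RGen) : X4 := match g with gx00 => x00 | gx11 => x11 | gp _ => x11 | gq _ => x00 end.

Lemma ev_last g : exists P, ev g = P ++ [lastg g] /\ nad (P ++ [lastg g]).
Proof.
  destruct g.
  - exists []. split; [reflexivity|exact I].
  - exists []. split; [reflexivity|exact I].
  - destruct (p_last i) as [P E]. exists P. simpl. rewrite <- E. split; auto. apply nad_p.
  - destruct (q_last i) as [P E]. exists P. simpl. rewrite <- E. split; auto. apply nad_q.
Qed.

Lemma N_cons g u : D4 (evw (g :: u)) = ev g ++ mrg eqb4 (lastg g) (D4 (evw u)).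
Proof.
  destruct (ev_last g) as (P & E & HN). change (evw (g :: u)) with (ev g ++ evw u).
  rewrite E. apply D4_glue'; auto.
Qed.

Lemma p_form n : exists T, p_word n = pw (S n) [x00;x01] ++ x10 :: T.
Proof. unfold p_word. destruct n; rewrite ?pw_0, ?(pw_S _ [x10;x01]), ?(pw_S _ [x10;x11]); cbn [app]; eauto. Qed.
Lemma q_form n : exists T, q_word n = pw (S n) [x11;x10] ++ x01 :: T.
Proof. destruct (p_form n) as [T E]. exists (map sig4 T). rewrite <- q_sig, E, map_app, map_pw. reflexivity. Qed.

Fixpoint cntab (l : list X4) : nat := match l with x00 :: x01 :: l' => S (cntab l') | _ => 0 end.
Fixpoint cntec (l : list X4) : nat := match l with x11 :: x10 :: l' => S (cntec l') | _ => 0 end.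
Definition fgen (W : list X4) : RGen := match W with
 | x00 :: x01 :: _ => gp (pred (cntab W)) | x00 :: _ => gx00
 | x11 :: x10 :: _ => gq (pred (cntec W)) | _ => gx11 end.

Lemma cntab_pw n X : cntab (pw n [x00;x01] ++ x10 :: X) = n.
Proof. induction n. reflexivity. rewrite pw_S. cbn [app]. simpl. rewrite IHn. reflexivity. Qed.
Lemma cntec_pw n X : cntec (pw n [x11;x10] ++ x01 :: X) = n.
Proof. induction n. reflexivity. rewrite pw_S. cbn [app]. simpl. rewrite IHn. reflexivity. Qed.

Ltac evh := repeat match goal with
  | |- context [ev (gp ?j)] => let T := fresh "T" in let E := fresh "E" in
        destruct (p_head j) as [T E]; change (ev (gp j)) with (p_word j); rewrite E
  | |- context [ev (gq ?j)] => let T := fresh "T" in let E := fresh "E" in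
        destruct (q_head j) as [T E]; change (ev (gq j)) with (q_word j); rewrite E
  end.

Lemma fgen_ok g u : red (g :: u) -> fgen (D4 (evw (g :: u))) = g.
Proof.
  intro R. rewrite N_cons. destruct g.
  - destruct u as [|h u]. reflexivity. destruct R as [R _].
    rewrite N_cons. destruct h; simpl in R; try contradiction; evh; reflexivity.
  - destruct u as [|h u]. reflexivity. destruct R as [R _].
    rewrite N_cons. destruct h; simpl in R; try contradiction; evh; reflexivity.
  - change (ev (gp i)) with (p_word i). destruct (p_form i) as [T E]. rewrite E, <- app_assoc.
    rewrite pw_S. cbn [app]. unfold fgen. change (cntab (x00 :: x01 :: pw i [x00; x01] ++ x10 :: T ++ mrg eqb4 (lastg (gp i)) (D4 (evw u))))
      with (S (cntab (pw i [x00; x01] ++ x10 :: T ++ mrg eqb4 (lastg (gp i)) (D4 (evw u))))).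
    rewrite cntab_pw. reflexivity.
  - change (ev (gq i)) with (q_word i). destruct (q_form i) as [T E]. rewrite E, <- app_assoc.
    rewrite pw_S. cbn [app]. unfold fgen. change (cntec (x11 :: x10 :: pw i [x11; x10] ++ x01 :: T ++ mrg eqb4 (lastg (gq i)) (D4 (evw u))))
      with (S (cntec (pw i [x11; x10] ++ x01 :: T ++ mrg eqb4 (lastg (gq i)) (D4 (evw u))))).
    rewrite cntec_pw. reflexivity.
Qed.

Lemma next g h u : red (g :: h :: u) -> exists y Y, D4 (evw (h :: u)) = y :: Y /\ (y = x00 \/ y = x11) /\
  (y = lastg g -> exists y2 Y2, Y = y2 :: Y2 /\ (y2 = x01 \/ y2 = x10)).
Proof.
  intros [R _]. rewrite N_cons. destruct g, h; simpl in R; try contradiction; evh; cbn [app lastg];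
  eexists; eexists; (split; [reflexivity|]); split; auto; intro; try discriminate; eauto.
Qed.

Lemma mrg_inj z y Y y' Y' : (y = x00 \/ y = x11) -> (y' = x00 \/ y' = x11) ->
  (y = z -> exists y2 Y2, Y = y2 :: Y2 /\ (y2 = x01 \/ y2 = x10)) ->
  (y' = z -> exists y2 Y2, Y' = y2 :: Y2 /\ (y2 = x01 \/ y2 = x10)) ->
  mrg eqb4 z (y :: Y) = mrg eqb4 z (y' :: Y') -> y :: Y = y' :: Y'.
Proof.
  intros Hy Hy' Hm Hm' H. destruct y, y', z; simpl in H; try congruence;
  try (destruct Hy as [Hy|Hy]; discriminate); try (destruct Hy' as [Hz|Hz]; discriminate);
  try (destruct (Hm eq_refl) as (y2 & Y2 & -> & [-> | ->]); discriminate);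
  try (destruct (Hm' eq_refl) as (y2 & Y2 & -> & [-> | ->]); discriminate).
Qed.

Lemma ev_nonnil g : ev g <> [].
Proof. destruct (ev_last g) as (P & E & _). rewrite E. destruct P; discriminate. Qed.

Lemma red_tail g u : red (g :: u) -> red u.
Proof. destruct u; simpl; tauto. Qed.

Lemma inj : forall u v, red u -> red v -> D4 (evw u) = D4 (evw v) -> u = v.
Proof.
  induction u as [|g u IH]; destruct v as [|h v]; intros Ru Rv E; auto.
  - exfalso. rewrite N_cons in E. destruct (ev h) eqn:Eh; [apply (ev_nonnil h); auto|discriminate].
  - exfalso. rewrite N_cons in E. destruct (ev g) eqn:Eh; [apply (ev_nonnil g); auto|discriminate].
  - assert (g = h) by (rewrite <- (fgen_ok g u Ru), <- (fgen_ok h v Rv), E; reflexivity). subst h.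
    f_equal. apply IH; [eapply red_tail; eauto | eapply red_tail; eauto |].
    rewrite !N_cons in E. apply app_inv_head in E.
    destruct u as [|g1 u]; destruct v as [|h1 v].
    + reflexivity.
    + exfalso. destruct (next g h1 v Rv) as (y & Y & Ev & Hy & Hm). rewrite Ev in E.
      change (evw []) with (@nil X4) in E. rewrite dd_nil in E. simpl in E. destruct (eqb4 y (lastg g)) eqn:Eq.
      * apply eqb4_ok in Eq. destruct (Hm Eq) as (? & ? & -> & _). discriminate.
      * discriminate.
    + exfalso. destruct (next g g1 u Ru) as (y & Y & Ev & Hy & Hm). rewrite Ev in E.
      change (evw []) with (@nil X4) in E. rewrite dd_nil in E. simpl in E. destruct (eqb4 y (lastg g)) eqn:Eq.
      * apply eqb4_ok in Eq. destruct (Hm Eq) as (? & ? & -> & _). discriminate.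
      * discriminate.
    + destruct (next g g1 u Ru) as (y & Y & Ev & Hy & Hm).
      destruct (next g h1 v Rv) as (y' & Y' & Ev' & Hy' & Hm').
      rewrite Ev, Ev' in *. eapply mrg_inj; eauto.
Qed.

Arguments pw : simpl never.
Arguments dd : simpl never.

Lemma reduced_red : forall u, reduced u -> red u.
Proof.
  induction u as [|g u IH]; intros [Hne Hf]. exact I.
  destruct u as [|h u]. exact I. split.
  - destruct (classic (ok g h)) as [|NO]; auto. exfalso; apply Hf; exists [], [g;h], u.
    split; [reflexivity|]. destruct g, h; simpl in NO; try tauto; eexists; constructor.
  - apply IH. split. discriminate. intros (l & m & r & E & F). apply Hf.
    exists (g :: l), m, r. rewrite E. split; auto.
Qed.

Lemma normalize : forall len u, length u <= len -> u <> [] -> exists v, reduced v /\ eqR u v.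
Proof.
  induction len; intros u Hl Hne. { destruct u; [congruence|simpl in Hl; lia]. }
  destruct (classic (exists l m r, u = l ++ m ++ r /\ forbidden m)) as [(l&m&r&E&b&Hb)|N].
  - destruct (IHlen (l ++ b ++ r)) as (v & Rv & Ev).
    + rewrite E in Hl. rewrite !length_app in *. destruct Hb; simpl in *; lia.
    + destruct Hb; destruct l; discriminate.
    + exists v. split; auto. eapply rst_trans; [|exact Ev]. rewrite E. apply rst_step. constructor. auto.
  - exists u. split. split; auto. apply rst_refl.
Qed.

Lemma evw_app u v : evw (u ++ v) = evw u ++ evw v.
Proof. unfold evw. rewrite map_app, concat_app. reflexivity. Qed.

Lemma eqF_iff X Y : eqF X Y <-> D4 X = D4 Y.
Proof. apply (dd_iff eqb4 eqb4_ok). Qed.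
Lemma eqG_iff X Y : eqG X Y <-> D3 X = D3 Y.
Proof. apply (dd_iff eqb3 eqb3_ok). Qed.

Lemma cong_app {A} R (X X' Y Y' : list A) : cong R X X' -> cong R Y Y' -> cong R (X ++ Y) (X' ++ Y').
Proof.
  intros H1 H2. eapply rst_trans.
  - apply (cong_ctx R X X' [] Y) in H1. exact H1.
  - apply (cong_ctx R Y Y' X' []) in H2. rewrite !app_nil_r in H2. exact H2.
Qed.

Lemma R_F : forall u v, eqR u v -> eqF (evw u) (evw v).
Proof.
  intros u v H. induction H.
  - destruct H as [l r a b Hr]. rewrite !evw_app. apply cong_ctx.
    apply eqF_iff. destruct Hr; unfold evw; cbn [map concat ev app]; rewrite ?app_nil_r.
    + reflexivity.
    + reflexivity.
    + destruct (p_head i) as [T E]. rewrite E. apply (dd_step eqb4 eqb4_ok []).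
    + destruct (p_last i) as [P E]. rewrite E, <- app_assoc. apply (dd_step eqb4 eqb4_ok).
    + destruct (q_head i) as [T E]. rewrite E. apply (dd_step eqb4 eqb4_ok []).
    + destruct (q_last i) as [P E]. rewrite E, <- app_assoc. apply (dd_step eqb4 eqb4_ok).
  - apply rst_refl.
  - apply rst_sym; auto.
  - eapply rst_trans; eauto.
Qed.

Arguments pw : simpl never.
Arguments dd : simpl never.

Lemma cong_xxL {A} (x : A) L : cong (@idem_rule A) (x :: x :: L) (x :: L).
Proof. apply rst_step. exact (step_intro _ [] L [x;x] [x] (idem_intro x)). Qed.

Lemma cong_rep {A} (x : A) i : cong (@idem_rule A) (x :: pw i [x;x]) [x].
Proof.
  induction i. apply rst_refl.
  rewrite pw_S. cbn [app]. eapply rst_trans; [|exact IHi].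
  eapply rst_trans; apply cong_xxL.
Qed.

Lemma cong_xx {A} (x : A) : cong (@idem_rule A) [x;x] [x].
Proof. apply cong_xxL. Qed.

Lemma cong_repS {A} (x : A) i : cong (@idem_rule A) (pw (S i) [x;x]) [x].
Proof.
  rewrite pw_S. cbn [app]. eapply rst_trans. apply cong_cons, cong_rep. apply cong_xx.
Qed.

Definition Tw i := pw (S i) [xl;xm] ++ pw i [xr;xm] ++ [xr].

Lemma p1 i : eqG (map h1 (p_word i)) (Tw i).
Proof.
  unfold p_word, Tw. rewrite !map_app, !map_pw. cbn [map h1].
  apply cong_app. apply rst_refl. apply cong_app. apply rst_refl. apply cong_repS.
Qed.

Lemma p2 i : eqG (map h2 (p_word i)) (Tw i).
Proof.
  unfold p_word. rewrite !map_app, !map_pw. cbn [map h2].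
  replace (Tw i) with ([xl] ++ pw i [xm;xl] ++ pw (S i) [xm;xr]).
  - apply cong_app. apply cong_repS. apply rst_refl.
  - unfold Tw. cbn [app]. rewrite <- pw_swap. rewrite (pw_Sr i [xl;xm]), <- app_assoc. f_equal.
    rewrite pw_S. cbn [app]. do 2 f_equal. rewrite pw_swap, app_nil_r. reflexivity.
Qed.

Lemma p3 i : eqG (map h3 (p_word i)) (Tw i).
Proof.
  unfold p_word. rewrite !map_app, !map_pw. cbn [map h3].
  rewrite (pw_Sr i [xl;xm]), (pw_S i [xm;xr]).
  replace ((pw i [xl; xm] ++ [xl; xm]) ++ pw i [xm; xm] ++ [xm; xr] ++ pw i [xm; xr])
    with ((pw i [xl; xm] ++ [xl]) ++ ((xm :: pw i [xm; xm]) ++ [xm]) ++ (pw i [xr;xm] ++ [xr])).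
  - unfold Tw. rewrite (pw_Sr i [xl;xm]).
    replace ((pw i [xl; xm] ++ [xl; xm]) ++ pw i [xr; xm] ++ [xr]) with
      ((pw i [xl; xm] ++ [xl]) ++ [xm] ++ (pw i [xr;xm] ++ [xr])) by (rewrite <- !app_assoc; reflexivity).
    apply cong_app. apply rst_refl. apply cong_app. 2: apply rst_refl.
    eapply rst_trans. apply cong_app. apply cong_rep. apply rst_refl. apply cong_xx.
  - rewrite <- !app_assoc. cbn [app]. rewrite (pw_swap i xr xm []), app_nil_r. reflexivity.
Qed.

Lemma inR_sig w : inR w -> inR (map sig4 w).
Proof.
  intros (Hne & H12 & H23). split; [|split].
  - destruct w; [congruence|discriminate].
  - rewrite m1, m2. apply cong_map. apply rst_sym; auto.
  - rewrite m2, m3. apply cong_map. eapply rst_trans; eauto.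
Qed.

Lemma part1 g : inR (ev g).
Proof.
  destruct g.
  - split. discriminate. split; apply rst_refl.
  - split. discriminate. split; apply rst_refl.
  - simpl. split. destruct (p_head i) as [T ->]; discriminate. split.
    + eapply rst_trans. apply p1. apply rst_sym, p2.
    + eapply rst_trans. apply p2. apply rst_sym, p3.
  - simpl. rewrite <- q_sig. apply inR_sig. split. destruct (p_head i) as [T ->]; discriminate. split.
    + eapply rst_trans. apply p1. apply rst_sym, p2.
    + eapply rst_trans. apply p2. apply rst_sym, p3.
Qed.

Lemma D3_D4 f w : D3 (map f (D4 w)) = D3 (map f w).
Proof.
  apply eqG_iff. apply cong_map. apply rst_sym. apply (cong_dd eqb4 eqb4_ok).
Qed.

Lemma part2 w : inR w -> exists u, u <> [] /\ eqF w (evw u).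
Proof.
  intros (Hne & H12 & H23). apply eqG_iff in H12, H23.
  destruct (gen (length (D4 w)) (D4 w)) as (u & Hu & E); auto.
  - apply (nad_dd eqb4 eqb4_ok).
  - apply (dd_nonnil eqb4 eqb4_ok); auto.
  - unfold A13. rewrite !D3_D4. congruence.
  - unfold A23. rewrite !D3_D4. congruence.
  - exists u. split; auto. apply eqF_iff. symmetry; exact E.
Qed.

Theorem lemma11p4 :
  (* the generators lie in |R| *)
  (forall g : RGen, inR (ev g)) /\
  (* they generate |R| *)
  (forall w : list X4, inR w -> exists u : list RGen, u <> [] /\ eqF w (evw u)) /\
  (* presentation: the defining relations give exactly the equalities in F *)
  (forall u v : list RGen, u <> [] -> v <> [] -> (eqF (evw u) (evw v) <-> eqR u v)) /\
  (* normal form: every element has exactly one reduced representative *)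
  (forall u : list RGen, u <> [] -> exists v, reduced v /\ eqR u v) /\
  (forall v1 v2 : list RGen, reduced v1 -> reduced v2 -> eqR v1 v2 -> v1 = v2).
Proof.
  split; [exact part1|]. split; [exact part2|]. split; [|split].
  - intros u v Hu Hv. split; [|apply R_F].
    intro E. destruct (normalize (length u) u) as (nu & Rnu & Enu); auto.
    destruct (normalize (length v) v) as (nv & Rnv & Env); auto.
    assert (nu = nv).
    { apply inj; try apply reduced_red; auto. apply eqF_iff.
      eapply rst_trans. apply rst_sym, R_F, Enu. eapply rst_trans. exact E. apply R_F, Env. }
    subst nv. eapply rst_trans. exact Enu. apply rst_sym, Env.
  - intros u Hu. apply (normalize (length u)); auto.
  - intros v1 v2 R1 R2 E. apply inj; try apply reduced_red; auto. apply eqF_iff, R_F, E.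
Qed.
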